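(* Consider a controlled Markov chain with finite state space $X$, finite action set $U$, unknown transition probabilities $p$ and rewards $r(x,u)\in(0,1]$, controlled by the RBMLE algorithm described in the context, with parameters $a>0$, $b>2$. Let $\mathcal{G}_1:=\{\omega: p\in\mathcal{C}(t)\ \forall t\in\mathbb{N}\}$. Then on $\mathcal{G}_1$, for every optimal policy $\pi^{\star}\in\Pi^{\star}(p)$, \[ I_k(\pi^{\star})\ge\alpha(\tau_k)(1-\gamma)J^{\star}(p)\quad\forall k=1,2,\dots,K, \] where $\gamma:=\frac{|X|^3|U|}{2a\,p_{\min}J^{\star}(p)}$ and $K$ is the number of episodes considered.
   Context: $\Pi_{sd}$: stationary deterministic policies $X\to U$. $J(\theta,\pi)$: long-term average reward under transition kernel $\theta$ and policy $\pi$; $J^{\star}(\theta)=\max_{\pi\in\Pi_{sd}}J(\theta,\pi)$; $\Pi^{\star}(p)=\arg\max_{\pi\in\Pi_{sd}}J(p,\pi)$. Known information: the zero pattern of $p$ and $p_{\min}:=\min_{(x,y,u):p(x,y,u)>0}p(x,y,u)$. $\Theta$: all $\theta\in[0,1]^{|X|\times|X|\times|U|}$ with $\theta(x,y,u)=0$ whenever $p(x,y,u)=0$ and $\sum_y\theta(x,y,u)=1$; $\theta(x,u)=\{\theta(x,y,u)\}_y$. $KL(p_1,p_2)=\sum_xp_1(x)\log\frac{p_1(x)}{p_2(x)}$. $n(x,u;t)$: number of times action $u$ was applied in state $x$ up to time $t$; $n(x,y,u;t)$: number of those followed by a move to $y$; $\hat p(x,y,u;t)=\frac{n(x,y,u;t)}{n(x,u;t)\vee1}$.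 $d_1(x,u;t)=\sqrt{\log(t^b|X|^2|U|)/n(x,u;t)}$ and $\mathcal{C}(t)=\{\theta\in\Theta:|\theta(x,y,u)-\hat p(x,y,u;t)|\le d_1(x,u;t)\ \forall(x,y,u)\}$. Episodes $\mathcal{E}_k=[\tau_k,\tau_{k+1}-1]$, $|\mathcal{E}_k|=2^k$; $n_k=n(\cdot;\tau_k)$, $\hat p_k=\hat p(\tau_k)$; $\alpha(t)=a\log(t^b|X|^2|U|)$. Index: $I_k(\pi)=\max_{\theta\in\Theta}\{\alpha(\tau_k)J(\theta,\pi)-\sum_{(x,u)}n_k(x,u)KL(\hat p_k(x,u),\theta(x,u))\}$; RBMLE applies $\pi_k\in\arg\max_{\pi\in\Pi_{sd}}I_k(\pi)$ during episode $k$. *)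

(* Defs.v *)
From HB Require Import structures.
From mathcomp Require Import all_boot all_order all_algebra.
From mathcomp Require Import all_classical all_reals all_analysis.
Set Implicit Arguments. Unset Strict Implicit. Unset Printing Implicit Defensive.
Import Order.TTheory GRing.Theory Num.Theory.
Local Open Scope ring_scope.
Local Open Scope classical_set_scope.

Section RBMLE.
Variables (R : realType) (X U : finType).

(* transition kernels theta(x,y,u) = prob. of moving x -> y under action u *)
Definition tkernel := X -> X -> U -> R.
Definition policy := {ffun X -> U}.

Fixpoint state_dist (theta : tkernel) (pi : policy) (x0 : X) (t : nat) : X -> R :=
  match t with
  | 0 => fun y => if y == x0 then 1 else 0
  | t'.+1 => fun y => \sum_(z : X) state_dist theta pi x0 t' z * theta z y (pi z)
  end.

Definition avg_reward (r : X -> U -> R) (x0 : X) (theta : tkernel) (pi : policy) : R :=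
  limn_inf (fun T : nat => (T.+1%:R)^-1 *
    \sum_(t < T.+1) \sum_(y : X) state_dist theta pi x0 t y * r y (pi y)).

Definition opt_reward (r : X -> U -> R) (x0 : X) (theta : tkernel) : R :=
  \big[Num.max/0]_(pi : policy) avg_reward r x0 theta pi.

Definition is_optimal (r : X -> U -> R) (x0 : X) (theta : tkernel) (pi : policy) : Prop :=
  forall pi' : policy, avg_reward r x0 theta pi' <= avg_reward r x0 theta pi.

Definition is_kernel (p : tkernel) : Prop :=
  (forall x y u, 0 <= p x y u) /\ (forall x u, \sum_(y : X) p x y u = 1).

Definition pmin (p : tkernel) : R :=
  \big[Num.min/1]_(i : X * X * U | 0 < p i.1.1 i.1.2 i.2) p i.1.1 i.1.2 i.2.

Definition Theta (p : tkernel) : set tkernel :=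
  [set theta | (forall x y u, 0 <= theta x y u <= 1) /\
               (forall x y u, p x y u = 0 -> theta x y u = 0) /\
               (forall x u, \sum_(y : X) theta x y u = 1)].

(* Counts along a trajectory (xs t, us t), t = 1, 2, ...; observations
   available at time t are the transitions (xs s, us s, xs s.+1), 1 <= s < t. *)
Definition cnt (xs : nat -> X) (us : nat -> U) (x : X) (u : U) (t : nat) : nat :=
  (\sum_(1 <= s < t) ((xs s == x) && (us s == u)))%N.

Definition cnt3 (xs : nat -> X) (us : nat -> U) (x y : X) (u : U) (t : nat) : nat :=
  (\sum_(1 <= s < t) [&& xs s == x, us s == u & xs s.+1 == y])%N.

Definition phat (xs : nat -> X) (us : nat -> U) (t : nat) : tkernel :=
  fun x y u => (cnt3 xs us x y u t)%:R / (maxn (cnt xs us x u t) 1)%:R.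

Definition logterm (b : R) (t : nat) : R :=
  ln ((t%:R) `^ b * (#|X| ^ 2 * #|U|)%N%:R).

(* d_1(x,u;t) = sqrt(log(t^b|X|^2|U|)/n(x,u;t)), +infinity when n = 0 *)
Definition conf_set (b : R) (xs : nat -> X) (us : nat -> U) (t : nat) (p : tkernel)
  : set tkernel :=
  [set theta | theta \in Theta p /\
     forall x y u, cnt xs us x u t = 0%N \/
       `|theta x y u - phat xs us t x y u|
          <= Num.sqrt (logterm b t / (cnt xs us x u t)%:R)].

(* episodes: tau_1 = 1, |E_k| = 2^k, so tau_k = 2^k - 1 *)
Definition tau (k : nat) : nat := (2 ^ k - 1)%N.

Definition alpha (a b : R) (t : nat) : R := a * logterm b t.

Definition KL (p1 p2 : X -> R) : \bar R :=
  (\sum_(y : X) (if p1 y == 0%R then 0%E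
                 else if p2 y == 0%R then +oo%E
                 else (p1 y * ln (p1 y / p2 y))%:E))%E.

Definition rbmle_index (r : X -> U -> R) (x0 : X) (a b : R) (p : tkernel)
  (xs : nat -> X) (us : nat -> U) (k : nat) (pi : policy) : \bar R :=
  ereal_sup ((fun theta : tkernel =>
     ((alpha a b (tau k) * avg_reward r x0 theta pi)%:E -
      \sum_(x : X) \sum_(u : U)
        ((cnt xs us x u (tau k))%:R%:E *
         KL (fun y => phat xs us (tau k) x y u) (fun y => theta x y u)))%E)
     @` Theta p).

End RBMLE.

(* Main.v *)
Require Import Defs.
From HB Require Import structures.
From mathcomp Require Import all_boot all_order all_algebra.
From mathcomp Require Import all_classical all_reals all_analysis.
From mathcomp Require Import ring lra.
Import Order.TTheory GRing.Theory Num.Theory.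
Local Open Scope ring_scope.
Local Open Scope classical_set_scope.

Section H.
Variables (R : realType) (X U : finType).

Lemma dist_prob (p : tkernel R X U) pi x0 t : is_kernel p ->
  (forall y, 0 <= state_dist p pi x0 t y) /\ \sum_y state_dist p pi x0 t y = 1.
Proof.
move=> [p0 p1]; elim: t => [|t [IH0 IH1]] /=.
  split; first by move=> y; case: ifP.
  by rewrite (bigD1 x0) //= eqxx big1 ?addr0 // => y /negbTE ->.
split; first by move=> y; apply: sumr_ge0 => z _; apply: mulr_ge0.
rewrite exchange_big /= -[RHS]IH1; apply: eq_bigr => z _.
by rewrite -mulr_sumr p1 mulr1.
Qed.

Lemma avg_ge (p : tkernel R X U) (r : X -> U -> R) pi x0 c : is_kernel p ->
  0 < c -> (forall x u, c <= r x u <= 1) -> c <= avg_reward r x0 p pi.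
Proof.
move=> pk c0 hr.
set u := (fun T : nat => (T.+1%:R)^-1 * \sum_(t < T.+1) \sum_(y : X) state_dist p pi x0 t y * r y (pi y)).
have hu : forall T, c <= u T <= 1.
  move=> T; rewrite /u.
  have hs : forall t, c <= \sum_y state_dist p pi x0 t y * r y (pi y) <= 1.
    move=> t; have [d0 d1] := dist_prob p pi x0 t pk; apply/andP; split.
      rewrite -[X in X <= _]mul1r -d1 mulr_suml; apply: ler_sum => y _.
      by rewrite ler_wpM2l // (andP (hr _ _)).1.
    rewrite -d1; apply: ler_sum => y _.
    by rewrite ler_piMr // (andP (hr _ _)).2.
  have hT : 0 < T.+1%:R :> R by rewrite ltr0n.
  apply/andP; split.
    rewrite ler_pdivlMl //.
    rewrite -[X in X <= _](_ : \sum_(t < T.+1) c = _); last by rewrite sumr_const card_ord mulr_natl.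
    by apply: ler_sum => t _; case/andP: (hs t).
  rewrite ler_pdivrMl // mulr1.
  rewrite -[X in _ <= X](_ : \sum_(t < T.+1) 1 = _); last by rewrite sumr_const card_ord.
  by apply: ler_sum => t _; case/andP: (hs t).
have bu : bounded_fun u.
  rewrite /bounded_near; near=> M => t _ /=.
  apply: (@le_trans _ _ 1).
    have := hu t; case/andP => h1 h2.
    by rewrite ger0_norm // (le_trans (ltW c0) h1).
  by near: M; exact: nbhs_pinfty_ge.
rewrite /avg_reward -/u limn_infE //.
apply: (@le_trans _ _ (infs u 0%N)).
  apply: lb_le_inf; first by exists (u 0%N); exists 0%N.
  by move=> _ [n _ <-]; exact: (andP (hu n)).1.
apply: ub_le_sup; first exact: bounded_fun_has_ubound_infs.
by exists 0%N.
Unshelve. all: by end_near.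
Qed.


Lemma cnt3_pos (p : tkernel R X U) (xs : nat -> X) (us : nat -> U) (x y : X) (u : U) (t : nat) :
  (forall s : nat, (1 <= s)%N -> 0 < p (xs s) (xs s.+1) (us s)) ->
  cnt3 xs us x y u t != 0%N -> 0 < p x y u.
Proof.
move=> hp; apply: contraR => hn.
rewrite /cnt3 big_nat_cond big1 // => s /andP[/andP[s1 _] _].
apply/eqP; rewrite eqb0; apply/negP => /and3P[/eqP ex /eqP eu /eqP ey].
by move: hn; rewrite -ex -eu -ey hp.
Qed.

Lemma sum_cnt3 (xs : nat -> X) (us : nat -> U) (x : X) (u : U) (t : nat) :
  (\sum_(y : X) cnt3 xs us x y u t)%N = cnt xs us x u t.
Proof.
rewrite /cnt3 /cnt exchange_big /=; apply: eq_bigr => s _.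
case: ((xs s == x) && (us s == u)) /andP => [[-> ->]|hn] /=.
  rewrite (bigD1 (xs s.+1)) //= eqxx big1 // => y; rewrite eq_sym => /negbTE ->.
  by [].
rewrite big1 // => y; case: (xs s == x) (us s == u) hn => [] [] //= hn.
by case: hn.
Qed.

Lemma sum_phat (xs : nat -> X) (us : nat -> U) (t : nat) (x : X) (u : U) : (0 < cnt xs us x u t)%N ->
  \sum_(y : X) phat R xs us t x y u = 1.
Proof.
move=> hn; rewrite /phat -mulr_suml -natr_sum sum_cnt3.
rewrite (maxn_idPl hn) mulfV // pnatr_eq0 -lt0n //.
Qed.

Definition KLr (q p' : X -> R) : R :=
  \sum_(y : X) (if q y == 0 then 0 else q y * ln (q y / p' y)).

Lemma KL_fin (q p' : X -> R) : (forall y, q y != 0 -> p' y != 0) ->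
  KL q p' = (KLr q p')%:E.
Proof.
move=> h; rewrite /KL /KLr -sumEFin; apply: eq_bigr => y _.
case: ifP => // /negbT /h /negbTE -> //.
Qed.

Lemma KLr_le (q p' : X -> R) : (forall y, 0 <= q y) -> (forall y, 0 <= p' y) ->
  (forall y, q y != 0 -> 0 < p' y) -> \sum_y q y = 1 -> \sum_y p' y = 1 ->
  KLr q p' <= \sum_y (q y - p' y)^+2 / p' y.
Proof.
move=> q0 p0 hqp sq sp.
have -> : \sum_y (q y - p' y)^+2 / p' y =
   \sum_y ((q y - p' y)^+2 / p' y + (q y - p' y)).
  by rewrite big_split /= sumrB sq sp subrr addr0.
apply: ler_sum => y _.
have [qz|qnz] := eqVneq (q y) 0.
  rewrite qz sub0r sqrrN.
  have [pz|pnz] := eqVneq (p' y) 0; first by rewrite pz expr0n /= mul0r subr0.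
  by rewrite expr2 mulfK // subrr.
have pp := hqp y qnz.
have qp : 0 < q y by rewrite lt_def qnz q0.
have hl : ln (q y / p' y) <= q y / p' y - 1.
  have := @le_ln1Dx R (q y / p' y - 1).
  rewrite addrCA subrr addr0; apply.
  by rewrite ltrBrDl subrr divr_gt0.
apply: le_trans (ler_wpM2l (ltW qp) hl) _.
rewrite le_eqVlt; apply/orP; left; apply/eqP.
by field; rewrite lt0r_neq0.
Qed.


Lemma arith (a L J S NX NU P : R) : 0 < a -> 0 < P -> 0 < J ->
  S <= NX^+2 * L / (2 * P) * NU * NX ->
  a * L * (1 - NX^+3 * NU / (2 * a * P * J)) * J <= a * L * J - S.
Proof.
move=> a0 P0 J0 h.
have -> : a * L * (1 - NX^+3 * NU / (2 * a * P * J)) * J =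
   a * L * J - NX^+2 * L / (2 * P) * NU * NX.
  by field; rewrite !gt_eqF.
by rewrite lerD2l lerN2.
Qed.

End H.

Theorem lemma3 (R : realType) (X U : finType) (p : tkernel R X U)
  (r : X -> U -> R) (a b : R) (x0 : X) (xs : nat -> X) (us : nat -> U) :
  is_kernel p ->
  (forall x u, 0 < r x u <= 1) ->
  0 < a -> 2 < b ->
  (* the trajectory starts at x0 and only makes transitions of positive probability *)
  xs 1%N = x0 ->
  (forall t : nat, (1 <= t)%N -> 0 < p (xs t) (xs t.+1) (us t)) ->
  (* actions are chosen by RBMLE: during episode k, u_t = pi_k(x_t), pi_k in argmax I_k *)
  (forall k : nat, (1 <= k)%N -> exists pik : policy X U,
      (forall pi : policy X U, (rbmle_index r x0 a b p xs us k pi <= rbmle_index r x0 a b p xs us k pik)%E)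
      /\ forall t : nat, (tau k <= t < tau k.+1)%N -> us t = pik (xs t)) ->
  (* the event G_1 *)
  (forall t : nat, p \in conf_set b xs us t p) ->
  forall pistar : policy X U, is_optimal r x0 p pistar ->
  forall k : nat, (1 <= k)%N ->
    ((alpha X U a b (tau k) *
      (1 - (#|X| ^ 3 * #|U|)%N%:R / (2 * a * pmin p * opt_reward r x0 p))
      * opt_reward r x0 p)%:E
     <= rbmle_index r x0 a b p xs us k pistar)%E.
Proof.
move=> pk hr a0 b2 hx1 htraj _ hG pistar hopt k k1.
have [p0 p1] := pk.
have pTh : p \in Theta p.
  by have := hG 0%N; rewrite in_setE => -[].
set L := logterm X U b (tau k).
have hX : (0 < #|X|)%N by apply/card_gt0P; exists x0.
have hU : (0 < #|U|)%N by apply/card_gt0P; exists (us 0%N).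
have tk1 : (1 <= tau k)%N.
  rewrite /tau; have : (2 <= 2 ^ k)%N.
    by rewrite -{1}(expn1 2) leq_exp2l.
  by case: (2 ^ k)%N => [|[|m]].
have L0 : 0 <= L.
  rewrite /L /logterm; apply: ln_ge0.
  have hh : 1 <= (tau k)%:R :> R by rewrite ler1n.
  have h1 : 1 <= (tau k)%:R `^ b :> R.
    by have := @ler_powR R _ hh 0 b; rewrite powRr0; apply; lra.
  have h2 : 1 <= (#|X| ^ 2 * #|U|)%N%:R :> R.
    by rewrite ler1n muln_gt0 expn_gt0 hX hU.
  by apply: le_trans (ler_pM ler01 ler01 h1 h2); rewrite mulr1.
have pm0 : 0 < pmin p.
  rewrite /pmin; apply: (big_ind (fun v => 0 < v)) => //.
  by move=> v w v0 w0; rewrite lt_min v0 w0.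
have pmle : forall x y u, 0 < p x y u -> pmin p <= p x y u.
  by move=> x y u h; exact: (@bigmin_le_cond _ _ _ _ (x, y, u) (fun i => 0 < p i.1.1 i.1.2 i.2) (fun i => p i.1.1 i.1.2 i.2)).
set J := avg_reward r x0 p pistar.
have J0 : 0 < J.
  set c := \big[Num.min/1]_(i : X * U) r i.1 i.2.
  have c0 : 0 < c.
    rewrite /c; apply: (big_ind (fun v => 0 < v)) => //.
      by move=> v w v0 w0; rewrite lt_min v0 w0.
    by move=> i _; case/andP: (hr i.1 i.2).
  have hcr : forall x u, c <= r x u <= 1.
    move=> x u; rewrite (andP (hr x u)).2 andbT.
    exact: (@bigmin_le _ _ _ _ (x, u) (fun i => r i.1 i.2)).
  have hc := @avg_ge R X U p r pistar x0 c pk c0 hcr.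
  exact: lt_le_trans c0 hc.
have optE : opt_reward r x0 p = J.
  rewrite /opt_reward; apply/eqP; rewrite eq_le; apply/andP; split.
    apply: bigmax_le; first exact: ltW.
    by move=> pi _; exact: hopt.
  exact: (@le_bigmax _ _ _ _ (fun pi => avg_reward r x0 p pi) pistar).
rewrite optE.
have hqp : forall x u y, phat R xs us (tau k) x y u != 0 -> 0 < p x y u.
  move=> x u y; rewrite /phat.
  have [->|h] := eqVneq (cnt3 xs us x y u (tau k)) 0%N; first by rewrite mul0r eqxx.
  by move=> _; exact: (@cnt3_pos R X U p xs us x y u (tau k) htraj h).
have hq0 : forall x u y, 0 <= phat R xs us (tau k) x y u.
  by move=> x u y; rewrite /phat divr_ge0.
have hconf := hG (tau k); rewrite in_setE in hconf; case: hconf => _ hconf.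
have B0 : 0 <= #|X|%:R^+2 * L / (2 * pmin p).
  apply: divr_ge0; first by apply: mulr_ge0 => //; exact: exprn_ge0.
  by apply: mulr_ge0 => //; exact: ltW.
have hB : forall x u, (cnt xs us x u (tau k))%:R *
    KLr R X (fun y => phat R xs us (tau k) x y u) (fun y => p x y u)
    <= #|X|%:R^+2 * L / (2 * pmin p).
  move=> x u.
  set q := (fun y => phat R xs us (tau k) x y u).
  set n := cnt xs us x u (tau k).
  case: (posnP n) => [->|npos]; first by rewrite mul0r.
  have sq : \sum_y q y = 1 by exact: (@sum_phat R X U xs us (tau k) x u npos).
  have hKL := @KLr_le R X q (fun y => p x y u) (hq0 x u) (fun y => p0 x y u) (hqp x u) sq (p1 x u).
  have nR : 0 < n%:R :> R by rewrite ltr0n.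
  have Ln0 : 0 <= L / n%:R by rewrite divr_ge0 // ltW.
  have hterm : forall y, (q y - p x y u)^+2 / p x y u <= L / n%:R / pmin p.
    move=> y; case: (ltP 0 (p x y u)) => [ppos|pneg].
      have hd : (q y - p x y u)^+2 <= L / n%:R.
        case: (hconf x y u) => [n0|hc]; first by move: npos; rewrite /n n0.
        rewrite -(real_normK (num_real _)) distrC expr2.
        rewrite -(sqr_sqrtr Ln0) expr2.
        by apply: ler_pM => //; exact: normr_ge0.
      apply: le_trans (ler_wpM2r _ hd) _; first by rewrite invr_ge0 ltW.
      apply: ler_wpM2l => //; rewrite lef_pV2 ?posrE //.
      exact: pmle.
    have pz : p x y u = 0 by apply/eqP; rewrite eq_le pneg p0.
    have qz : q y = 0.
      case: (eqVneq (q y) 0) => // hq.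
      by have := hqp x u y hq; rewrite pz ltxx.
    by rewrite pz qz subrr expr0n /= mul0r divr_ge0 // ltW.
  have [X1|X2] := leqP #|X| 1.
    have e1 : #|X| = 1%N by apply/eqP; rewrite eqn_leq X1 hX.
    have [y0 hy0] := fintype1 e1.
    have s1 : forall f : X -> R, \sum_y f y = f y0.
      move=> f; rewrite (bigD1 y0) //= big1 ?addr0 // => z.
      by rewrite (hy0 z) eqxx.
    move: hKL; rewrite !s1 -/q.
    rewrite s1 in sq; have := p1 x u; rewrite s1 => ->; rewrite sq subrr expr0n /= mul0r => hKL.
    by apply: le_trans B0; rewrite mulr_ge0_le0 // ltW.
  have hchi : \sum_y (q y - p x y u)^+2 / p x y u <= #|X|%:R * (L / n%:R / pmin p).
    apply: le_trans (ler_sum _ (fun y _ => hterm y)) _.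
    by rewrite sumr_const mulr_natl.
  apply: le_trans (ler_wpM2l (ltW nR) (le_trans hKL hchi)) _.
  have -> : n%:R * (#|X|%:R * (L / n%:R / pmin p)) = #|X|%:R * L / pmin p.
    by field; rewrite gt_eqF // gt_eqF.
  have -> : #|X|%:R ^+ 2 * L / (2 * pmin p) = (#|X|%:R * L / pmin p) * (#|X|%:R / 2).
    by field; rewrite gt_eqF.
  rewrite -[leLHS]mulr1; apply: ler_wpM2l.
    by rewrite divr_ge0 ?mulr_ge0 // ltW.
  by rewrite ler_pdivlMr // mul1r ler_nat.
rewrite /rbmle_index; apply: le_trans; last first.
  apply: ereal_sup_ubound; exists p; first by rewrite -in_setE.
  reflexivity.
rewrite /=.
set S := (\sum_x \sum_u (cnt xs us x u (tau k))%:R *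
    KLr R X (fun y => phat R xs us (tau k) x y u) (fun y => p x y u)).
have hS : (\sum_x \sum_u (((cnt xs us x u (tau k))%:R)%:E *
     KL (fun y => phat R xs us (tau k) x y u) (fun y => p x y u)))%E = S%:E.
  rewrite /S -sumEFin; apply: eq_bigr => x _; rewrite -sumEFin.
  apply: eq_bigr => u _; rewrite KL_fin ?EFinM // => y /(hqp x u y) h.
  by rewrite gt_eqF.
rewrite -/J hS -EFinB lee_fin.
have hSle : S <= \sum_(x : X) \sum_(u : U) (#|X|%:R^+2 * L / (2 * pmin p)).
  by apply: ler_sum => x _; apply: ler_sum => u _; exact: hB.
have hc : forall (T : finType) (c : R), \sum_(i : T) c = c * #|T|%:R.
  by move=> T c; rewrite sumr_const mulr_natr.
rewrite hc hc in hSle.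
rewrite /alpha -/L.
have hN : (#|X| ^ 3 * #|U|)%N%:R = (#|X|%:R)^+3 * (#|U|%:R) :> R by rewrite natrM natrX.
rewrite hN.
exact: arith.
Qed.
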